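(* Let $N,M,L,I$ be positive integers, $\sigma^2>0$, $\rho>0$. For $i\in\{1,\dots,I\}$ let $\hat\alpha_i\in\mathbb C$, $\hat{\mathbf G}_i\in\mathbb C^{N\times M}$, $\mathbf a_i\in\mathbb C^N$; for $1\le i<j\le I$ let $\beta_{i,j}\ge0$; and let $\mathbf x\in\mathbb C^M$, $\boldsymbol\theta\in\mathbb C^N$ be fixed. For $i,j\in\{1,\dots,I\}$ define $\mathbf A_{i,j}=(\hat{\mathbf G}_j^{*}\hat{\mathbf G}_i^{T})\odot(\mathbf a_i\mathbf a_j^H)^T$ and $\mathbf B_{i,j}=(\mathbf a_j^{*}\mathbf a_i^T)\odot(\hat{\mathbf G}_i\mathbf x\mathbf x^H\hat{\mathbf G}_j^H)^T$. For $\mathbf Q\in\mathbb C^{N\times N}$ let $$\varphi_{i,j}(\mathbf Q)=\frac{L}{\sigma^2}\Big(|\hat\alpha_i|^2\mathrm{tr}(\mathbf Q^H\mathbf A_{i,i}\mathbf Q\mathbf B_{i,i})-2\Re\{\hat\alpha_i\hat\alpha_j^{*}\mathrm{tr}(\mathbf Q^H\mathbf A_{i,j}\mathbf Q\mathbf B_{i,j})\}+|\hat\alpha_j|^2\mathrm{tr}(\mathbf Q^H\mathbf A_{j,j}\mathbf Q\mathbf B_{j,j})\Big),$$ $$\varpi(\mathbf Q)=\sum_{i=1}^{I}\sum_{j=i+1}^{I}\beta_{i,j}\varphi_{i,j}(\mathbf Q)+\frac{1}{2\rho}\Re\{\boldsymbol\theta^H\mathbf Q\boldsymbol\theta\},$$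 and let $\mathcal M=\{\mathbf Q\in\mathbb C^{N\times N}:|\mathbf Q(m,n)|=1\ \forall m,n\}$. Further define $$\mathbf D_{i,j}(\mathbf Q)=\frac{L}{\sigma^2}\Big(|\hat\alpha_i|^2\mathbf A_{i,i}\mathbf Q\mathbf B_{i,i}-\hat\alpha_i\hat\alpha_j^{*}\mathbf A_{i,j}\mathbf Q\mathbf B_{i,j}-\hat\alpha_i^{*}\hat\alpha_j\mathbf A_{i,j}^H\mathbf Q\mathbf B_{i,j}^H+|\hat\alpha_j|^2\mathbf A_{j,j}\mathbf Q\mathbf B_{j,j}\Big)$$ and, for $m,n\in\{1,\dots,N\}$, $$\chi_{i,j}^{(m,n)}=|\hat\alpha_i|^2\mathbf A_{i,i}(m,m)\mathbf B_{i,i}(n,n)-2\Re\{\hat\alpha_i\hat\alpha_j^{*}\mathbf A_{i,j}(m,m)\mathbf B_{i,j}(n,n)\}+|\hat\alpha_j|^2\mathbf A_{j,j}(m,m)\mathbf B_{j,j}(n,n).$$ Then, when the block coordinate descent method is applied to $\max_{\mathbf Q\in\mathcal M}\varpi(\mathbf Q)$ updating one entry at a time, the entry $(m,n)$ (for any $m,n$, with all other entries of $\mathbf Q\in\mathcal M$ fixed) is updated as $$\mathbf Q(m,n)\leftarrow\exp\Big\{j\arg\Big(\sum_{i<j}\beta_{i,j}[\mathbf D_{i,j}(\mathbf Q)]_{m,n}+\frac{1}{4\rho}[\boldsymbol\theta\boldsymbol\theta^H]_{m,n}-\frac{L}{\sigma^2}\mathbf Q(m,n)\sum_{i<j}\beta_{i,j}\chi_{i,j}^{(m,n)}\Big)\Big\},$$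 i.e. this value maximizes $\varpi$ over all matrices in $\mathcal M$ that coincide with $\mathbf Q$ outside the entry $(m,n)$ (with $\arg 0$ taken arbitrarily).
   Context: $\odot$ is the Hadamard product, $(\cdot)^*$ entrywise conjugate, $(\cdot)^H$ conjugate transpose, $j$ the imaginary unit (also used as an index), $\arg$ the argument of a complex number, $\sum_{i<j}$ denotes $\sum_{i=1}^I\sum_{j=i+1}^I$. $\mathbf D_{i,j}(\mathbf Q)$ is the Wirtinger derivative $\partial\varphi_{i,j}/\partial\mathbf Q^{*}$. *)

(* Defs.v *)
From HB Require Import structures.
From mathcomp Require Import all_boot all_order all_algebra.
From mathcomp Require Import complex.
From mathcomp Require Import reals trigo.
Set Implicit Arguments. Unset Strict Implicit. Unset Printing Implicit Defensive.
Import Order.TTheory GRing.Theory Num.Theory.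
Local Open Scope ring_scope.
Local Open Scope complex_scope.

Section Defs.
Variable R : realType.
Local Notation C := R[i].

Definition conjm m n (A : 'M[C]_(m, n)) : 'M[C]_(m, n) := map_mx (fun z => z^*) A.
Definition hermt m n (A : 'M[C]_(m, n)) : 'M[C]_(n, m) := (conjm A)^T.
Definition hadamard m n (A B : 'M[C]_(m, n)) : 'M[C]_(m, n) :=
  \matrix_(p, q) (A p q * B p q).

Definition expj (t : R) : C := cos t +i* sin t.

Variables (N M I : nat).

Definition Amat (G : 'I_I -> 'M[C]_(N, M)) (a : 'I_I -> 'cV[C]_N) (i j : 'I_I)
  : 'M[C]_N :=
  hadamard (conjm (G j) *m (G i)^T) ((a i *m hermt (a j))^T).

Definition Bmat (G : 'I_I -> 'M[C]_(N, M)) (a : 'I_I -> 'cV[C]_N) (x : 'cV[C]_M)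
  (i j : 'I_I) : 'M[C]_N :=
  hadamard (conjm (a j) *m (a i)^T) ((G i *m x *m hermt x *m hermt (G j))^T).

Variables (L : nat) (sigma2 rho : R) (alpha : 'I_I -> C)
  (G : 'I_I -> 'M[C]_(N, M)) (a : 'I_I -> 'cV[C]_N)
  (beta : 'I_I -> 'I_I -> R) (x : 'cV[C]_M) (theta : 'cV[C]_N).

Local Notation A := (Amat G a).
Local Notation B := (Bmat G a x).
Local Notation c := ((L%:R : C) / sigma2%:C).

Definition phi (i j : 'I_I) (Q : 'M[C]_N) : C :=
  c * (`|alpha i| ^+ 2 * \tr (hermt Q *m A i i *m Q *m B i i)
       - 2 * 'Re (alpha i * (alpha j)^* * \tr (hermt Q *m A i j *m Q *m B i j))
       + `|alpha j| ^+ 2 * \tr (hermt Q *m A j j *m Q *m B j j)).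

Definition varpi (Q : 'M[C]_N) : C :=
  \sum_(i < I) \sum_(j < I | (i < j)%N) (beta i j)%:C * phi i j Q
  + (2 * rho)^-1%:C * 'Re (\tr (hermt theta *m Q *m theta)).

Definition unimod (Q : 'M[C]_N) : Prop := forall p q, `|Q p q| = 1.

Definition Dmat (i j : 'I_I) (Q : 'M[C]_N) : 'M[C]_N :=
  c *: (`|alpha i| ^+ 2 *: (A i i *m Q *m B i i)
        - (alpha i * (alpha j)^*) *: (A i j *m Q *m B i j)
        - ((alpha i)^* * alpha j) *: (hermt (A i j) *m Q *m hermt (B i j))
        + `|alpha j| ^+ 2 *: (A j j *m Q *m B j j)).

Definition chi (i j : 'I_I) (m n : 'I_N) : C :=
  `|alpha i| ^+ 2 * A i i m m * B i i n n
  - 2 * 'Re (alpha i * (alpha j)^* * A i j m m * B i j n n)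
  + `|alpha j| ^+ 2 * A j j m m * B j j n n.

Definition bcd_arg (Q : 'M[C]_N) (m n : 'I_N) : C :=
  \sum_(i < I) \sum_(j < I | (i < j)%N) (beta i j)%:C * Dmat i j Q m n
  + (4 * rho)^-1%:C * (theta *m hermt theta) m n
  - c * Q m n * \sum_(i < I) \sum_(j < I | (i < j)%N) (beta i j)%:C * chi i j m n.

End Defs.

Definition upd_entry (T : Type) N (Q : 'M[T]_N) (m n : 'I_N) (v : T) : 'M[T]_N :=
  \matrix_(p, q) (if (p == m) && (q == n) then v else Q p q).

(* Main.v *)
Require Import Defs.
From HB Require Import structures.
From mathcomp Require Import all_boot all_order all_algebra.
From mathcomp Require Import complex.
From mathcomp Require Import reals trigo.
From mathcomp Require Import ring lra.
Import Order.TTheory GRing.Theory Num.Theory.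
Local Open Scope ring_scope.
Local Open Scope complex_scope.

Section H.
Variable R : realType.
Local Notation C := R[i].
Local Notation "z ^cj" := (@conjc _ z) (at level 2, format "z ^cj").
Lemma numconjE (z : C) : Num.conj z = z^cj. Proof. by []. Qed.

Lemma ReE' (z : C) : 'Re z = (z + z^cj) / 2.
Proof. by rewrite /Re unlock. Qed.

Lemma conjmE p r (X : 'M[C]_(p, r)) i j : conjm X i j = (X i j)^cj.
Proof. by rewrite mxE. Qed.

Lemma hermtE p r (X : 'M[C]_(p, r)) i j : hermt X i j = (X j i)^cj.
Proof. by rewrite !mxE. Qed.

Lemma hermtK p r (X : 'M[C]_(p, r)) : hermt (hermt X) = X.
Proof. by apply/matrixP => i j; rewrite !hermtE conjcK. Qed.

Lemma conjmK p r (X : 'M[C]_(p, r)) : conjm (conjm X) = X.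
Proof. by apply/matrixP => i j; rewrite !conjmE conjcK. Qed.

Lemma hermt_mul p r s (X : 'M[C]_(p, r)) (Y : 'M[C]_(r, s)) :
  hermt (X *m Y) = hermt Y *m hermt X.
Proof.
apply/matrixP => i j; rewrite hermtE !mxE rmorph_sum; apply: eq_bigr => k _.
by rewrite !hermtE rmorphM mulrC.
Qed.

Lemma hermt_tr p r (X : 'M[C]_(p, r)) : hermt X^T = conjm X.
Proof. by apply/matrixP => i j; rewrite hermtE conjmE mxE. Qed.

Lemma hermt_conjm p r (X : 'M[C]_(p, r)) : hermt (conjm X) = X^T.
Proof. by apply/matrixP => i j; rewrite hermtE conjmE conjcK mxE. Qed.

Lemma hermt_had p r (X Y : 'M[C]_(p, r)) :
  hermt (hadamard X Y) = hadamard (hermt X) (hermt Y).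
Proof. by apply/matrixP => i j; rewrite !mxE rmorphM. Qed.

Lemma hermt_trH p (Y : 'M[C]_p) : hermt Y = Y -> hermt Y^T = Y^T.
Proof.
move=> hY; apply/matrixP => i j; rewrite hermtE mxE mxE -{1}hY hermtE conjcK //.
Qed.

Lemma hermtD p r (X Y : 'M[C]_(p, r)) : hermt (X + Y) = hermt X + hermt Y.
Proof. by apply/matrixP => i j; rewrite !mxE rmorphD. Qed.

Lemma hermtZ p r (c : C) (X : 'M[C]_(p, r)) : hermt (c *: X) = c^cj *: hermt X.
Proof. by apply/matrixP => i j; rewrite !mxE rmorphM. Qed.

Lemma hermt_delta p (i j : 'I_p) : hermt (delta_mx i j : 'M[C]_p) = delta_mx j i.
Proof.
apply/matrixP => k l; rewrite hermtE !mxE andbC.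
by case: (_ && _); rewrite ?conjc1 ?conjc0.
Qed.


Lemma tr_delta_l p (i j : 'I_p) (Z : 'M[C]_p) : \tr (delta_mx i j *m Z) = Z j i.
Proof.
rewrite /mxtrace (bigD1 i) //= big1 ?addr0.
  rewrite mxE (bigD1 j) //= big1 ?addr0; first by rewrite mxE !eqxx mul1r.
  by move=> l hl; rewrite mxE (negbTE hl) andbF mul0r.
by move=> k hk; rewrite mxE big1 // => l _; rewrite mxE (negbTE hk) mul0r.
Qed.

Lemma tr_delta_mid p k (i j : 'I_p) (X : 'M[C]_(k, p)) (Y : 'M[C]_(p, k)) :
  \tr (X *m delta_mx i j *m Y) = (Y *m X) j i.
Proof. by rewrite mxtrace_mulC mulmxA mxtrace_mulC tr_delta_l. Qed.

Lemma KEP p (i j : 'I_p) (K P : 'M[C]_p) k l :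
  (K *m delta_mx i j *m P) k l = K k i * P j l.
Proof.
have -> : (delta_mx i j : 'M[C]_p) = delta_mx i (0 : 'I_1) *m delta_mx 0 j.
  by rewrite mul_delta_mx.
by rewrite mulmxA -colE -mulmxA -rowE mxE big_ord1 !mxE.
Qed.

Section Loc.
Variables (p : nat) (m n : 'I_p).
Local Notation E := (delta_mx m n : 'M[C]_p).

Lemma Texp (Q0 K P : 'M[C]_p) (q : C) :
  \tr (hermt (Q0 + q *: E) *m K *m (Q0 + q *: E) *m P) =
  \tr (hermt Q0 *m K *m Q0 *m P) + q^cj * (K *m Q0 *m P) m n
  + q * ((hermt K *m Q0 *m hermt P) m n)^cj + q * q^cj * (K m m * P n n).
Proof.
rewrite hermtD hermtZ hermt_delta.
rewrite !(mulmxDl, mulmxDr) !mxtraceD.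
rewrite -!(scalemxAl, scalemxAr) !mxtraceZ.
have h1 : \tr (delta_mx n m *m K *m Q0 *m P) = (K *m Q0 *m P) m n.
  by rewrite -!mulmxA tr_delta_l !mulmxA.
have h2 : \tr (hermt Q0 *m K *m delta_mx m n *m P)
          = ((hermt K *m Q0 *m hermt P) m n)^cj.
  by rewrite tr_delta_mid -[LHS]conjcK -hermtE !hermt_mul hermtK.
have h3 : \tr (delta_mx n m *m K *m delta_mx m n *m P) = K m m * P n n.
  by rewrite -!mulmxA tr_delta_l mulmxA KEP.
rewrite h1 h2 h3; ring.
Qed.
End Loc.

Lemma cjM (u v : C) : (u * v)^cj = u^cj * v^cj. Proof. exact: rmorphM. Qed.
Lemma cjD (u v : C) : (u + v)^cj = u^cj + v^cj. Proof. exact: rmorphD. Qed.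
Lemma cjB (u v : C) : (u - v)^cj = u^cj - v^cj. Proof. exact: rmorphB. Qed.
Lemma cjN (u : C) : (- u)^cj = - u^cj. Proof. exact: rmorphN. Qed.
Lemma cjV (u : C) : (u^-1)^cj = (u^cj)^-1. Proof. exact: conjc_inv. Qed.
Lemma cjnat k : ((k%:R : C))^cj = k%:R. Proof. exact: rmorph_nat. Qed.

Lemma sC0 (s : R) : s != 0 -> s%:C != 0.
Proof. move=> hs; apply/negP => /eqP h; move/negP: hs; apply; case: h => ->. by []. Qed.

Lemma eD p r (X Y : 'M[C]_(p, r)) i j : (X + Y) i j = X i j + Y i j.
Proof. by rewrite mxE. Qed.
Lemma eN p r (X : 'M[C]_(p, r)) i j : (- X) i j = - X i j.
Proof. by rewrite mxE. Qed.
Lemma eZ p r c (X : 'M[C]_(p, r)) i j : (c *: X) i j = c * X i j.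
Proof. by rewrite mxE. Qed.

Lemma KQP p (m n : 'I_p) (Q0 K P : 'M[C]_p) (q : C) :
  (K *m (Q0 + q *: delta_mx m n) *m P) m n = (K *m Q0 *m P) m n + q * (K m m * P n n).
Proof. by rewrite mulmxDr mulmxDl eD -scalemxAr -scalemxAl eZ KEP. Qed.

Lemma decomp p (m n : 'I_p) (Q Q' : 'M[C]_p) :
  (forall p q, (p != m) || (q != n) -> Q' p q = Q p q) ->
  Q' = upd_entry Q m n 0 + Q' m n *: delta_mx m n.
Proof.
move=> h; apply/matrixP => k l; rewrite !mxE.
case: (boolP ((k == m) && (l == n))) => [/andP [/eqP -> /eqP ->]|hkl].
  by rewrite add0r mulr1.
by rewrite mulr0 addr0 h //; move: hkl; rewrite negb_and.
Qed.

Section Main.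
Variables (N M I L : nat) (sigma2 rho : R) (alpha : 'I_I -> C)
  (G : 'I_I -> 'M[C]_(N, M)) (a : 'I_I -> 'cV[C]_N)
  (beta : 'I_I -> 'I_I -> R) (x : 'cV[C]_M) (theta : 'cV[C]_N).
Local Notation A := (Amat G a).
Local Notation B := (Bmat G a x).
Local Notation c := ((L%:R : C) / sigma2%:C).

Lemma hA i : hermt (A i i) = A i i.
Proof.
rewrite /Amat hermt_had; congr hadamard.
  by rewrite hermt_mul hermt_tr hermt_conjm.
by apply: hermt_trH; rewrite hermt_mul hermtK.
Qed.

Lemma hB i : hermt (B i i) = B i i.
Proof.
rewrite /Bmat hermt_had; congr hadamard.
  by rewrite hermt_mul hermt_tr hermt_conjm.
by apply: hermt_trH; rewrite !hermt_mul !hermtK !mulmxA.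
Qed.

Variables (m n : 'I_N).
Local Notation E := (delta_mx m n : 'M[C]_N).

Lemma cJ : c^cj = c.
Proof. by rewrite cjM cjnat cjV conjc_real. Qed.
Lemma DmatE i j (Q0 : 'M[C]_N) : Dmat L sigma2 alpha G a x i j Q0 m n =
  c * (`|alpha i| ^+ 2 * (A i i *m Q0 *m B i i) m n
       - (alpha i * (alpha j)^cj) * (A i j *m Q0 *m B i j) m n
       - ((alpha i)^cj * alpha j) * (hermt (A i j) *m Q0 *m hermt (B i j)) m n
       + `|alpha j| ^+ 2 * (A j j *m Q0 *m B j j) m n).
Proof.
rewrite /Dmat; move: (Amat G a) (Bmat G a x) => AA BB.
by rewrite eZ !eD !eN !eZ.
Qed.

Lemma phi_exp i j (Q0 Q1 : 'M[C]_N) (q : C) : sigma2 != 0 -> q * q^cj = 1 ->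
  Q1 = Q0 + q *: E ->
  phi L sigma2 alpha G a x i j Q1 =
  phi L sigma2 alpha G a x i j Q0 + c * chi alpha G a x i j m n
  + q^cj * Dmat L sigma2 alpha G a x i j Q0 m n
  + q * (Dmat L sigma2 alpha G a x i j Q0 m n)^cj.
Proof.
move=> hs hq hQ1.
have hA' := hA; have hB' := hB.
rewrite /phi /chi DmatE.
move: (Amat G a) (Bmat G a x) hA' hB' => AA BB hAA hBB.
have h1 := Texp _ m n Q0 (AA i i) (BB i i) q.
have h2 := Texp _ m n Q0 (AA i j) (BB i j) q.
have h3 := Texp _ m n Q0 (AA j j) (BB j j) q.
rewrite -hQ1 hq mul1r !hAA !hBB in h1 h2 h3.
rewrite h1 h2 h3.
rewrite !ReE'; try rewrite (numconjE (alpha i)); try rewrite (numconjE (alpha j)); rewrite !sqr_normc.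
rewrite !(cjD, cjN, cjB, cjM, conjcK, cjnat, cjV, conjc1, conjc_real).
by field; exact: sC0.
Qed.
Lemma Dmat_shift i j (Q0 Q1 : 'M[C]_N) (q : C) : sigma2 != 0 ->
  Q1 = Q0 + q *: E ->
  Dmat L sigma2 alpha G a x i j Q1 m n =
  Dmat L sigma2 alpha G a x i j Q0 m n + c * q * chi alpha G a x i j m n.
Proof.
move=> hs hQ1.
rewrite !DmatE /chi.
move: (Amat G a) (Bmat G a x) => AA BB.
have k1 := KQP _ m n Q0 (AA i i) (BB i i) q.
have k2 := KQP _ m n Q0 (AA i j) (BB i j) q.
have k3 := KQP _ m n Q0 (hermt (AA i j)) (hermt (BB i j)) q.
have k4 := KQP _ m n Q0 (AA j j) (BB j j) q.
rewrite -hQ1 in k1 k2 k3 k4.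
rewrite k1 k2 k3 k4 !hermtE.
rewrite !ReE'; try rewrite (numconjE (alpha i)); try rewrite (numconjE (alpha j)); rewrite !sqr_normc.
rewrite !(cjD, cjN, cjB, cjM, conjcK, cjnat, cjV, conjc1, conjc_real).
by field; exact: sC0.
Qed.

Lemma theta_exp (Q0 Q1 : 'M[C]_N) (q : C) : Q1 = Q0 + q *: E ->
  'Re (\tr (hermt theta *m Q1 *m theta)) =
  'Re (\tr (hermt theta *m Q0 *m theta))
  + (q^cj * (theta *m hermt theta) m n + q * ((theta *m hermt theta) m n)^cj) / 2.
Proof.
move=> ->.
rewrite mulmxDr mulmxDl mxtraceD -scalemxAr -scalemxAl mxtraceZ tr_delta_mid.
have -> : (theta *m hermt theta) n m = ((theta *m hermt theta) m n)^cj.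
  by rewrite -hermtE hermt_mul hermtK.
rewrite !ReE' !(cjD, cjN, cjB, cjM, conjcK).
by field.
Qed.
End Main.
End H.


Section H2.
Variable R : realType.
Local Notation C := R[i].
Local Notation "z ^cj" := (@conjc _ z) (at level 2, format "z ^cj").

Lemma cj_sum (J : Type) (r : seq J) (P : pred J) (F : J -> C) :
  (\sum_(k <- r | P k) F k)^cj = \sum_(k <- r | P k) (F k)^cj.
Proof. exact: rmorph_sum. Qed.

Lemma cj_norm (z : C) : (`|z|)^cj = `|z|.
Proof. exact: conj_normC. Qed.

Lemma norm_expj (t : R) : `|expj t| = 1.
Proof.
rewrite normc_def /= cos2Dsin2 sqrtr1 //.
Qed.

Lemma rho_half (rho : R) : rho != 0 ->
  ((2 * rho)^-1)%:C / 2 = ((4 * rho)^-1)%:C :> C.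
Proof.
move=> hr.
have -> : (4 * rho)^-1 = (2 * rho)^-1 / 2.
  by field.
by rewrite rmorphM !fmorphV rmorph_nat.
Qed.

Lemma cj_dsum (I : nat) (F : 'I_I -> 'I_I -> C) :
  (\sum_(i < I) \sum_(j < I | (i < j)%N) F i j)^cj
  = \sum_(i < I) \sum_(j < I | (i < j)%N) (F i j)^cj.
Proof. rewrite rmorph_sum; apply: eq_bigr => i _; exact: rmorph_sum. Qed.

Section Main2.
Variables (N M I L : nat) (sigma2 rho : R) (alpha : 'I_I -> C)
  (G : 'I_I -> 'M[C]_(N, M)) (a : 'I_I -> 'cV[C]_N)
  (beta : 'I_I -> 'I_I -> R) (x : 'cV[C]_M) (theta : 'cV[C]_N).
Hypotheses (hs : sigma2 != 0) (hr : rho != 0).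
Variables (m n : 'I_N).
Local Notation E := (delta_mx m n : 'M[C]_N).
Local Notation c := ((L%:R : C) / sigma2%:C).
Local Notation phi := (phi L sigma2 alpha G a x).
Local Notation Dmat := (Dmat L sigma2 alpha G a x).
Local Notation chi := (chi alpha G a x).

Definition K0 (Q0 : 'M[C]_N) : C :=
  \sum_(i < I) \sum_(j < I | (i < j)%N) (beta i j)%:C * (phi i j Q0 + c * chi i j m n)
  + (2 * rho)^-1%:C * 'Re (\tr (hermt theta *m Q0 *m theta)).

Definition b0 (Q0 : 'M[C]_N) : C :=
  \sum_(i < I) \sum_(j < I | (i < j)%N) (beta i j)%:C * Dmat i j Q0 m n
  + (4 * rho)^-1%:C * (theta *m hermt theta) m n.

Lemma varpi_exp (Q0 Q1 : 'M[C]_N) (q : C) : q * q^cj = 1 -> Q1 = Q0 + q *: E ->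
  varpi L sigma2 rho alpha G a beta x theta Q1 = K0 Q0 + q^cj * b0 Q0 + q * (b0 Q0)^cj.
Proof.
move=> hq hQ1.
rewrite /varpi (theta_exp _ _ theta m n Q0 Q1 q hQ1).
have e : forall i j, (beta i j)%:C * phi i j Q1 =
   (beta i j)%:C * (phi i j Q0 + c * chi i j m n)
   + (q^cj * ((beta i j)%:C * Dmat i j Q0 m n)
      + q * ((beta i j)%:C * Dmat i j Q0 m n)^cj).
  move=> i j; rewrite (phi_exp _ _ _ _ _ _ _ _ _ _ m n i j Q0 Q1 q hs hq hQ1).
  by rewrite cjM conjc_real; ring.
rewrite (eq_bigr _ (fun i _ => eq_bigr _ (fun j _ => e i j))).
under eq_bigr => i _ do rewrite big_split /= big_split /= -!mulr_sumr.
rewrite big_split /= big_split /= -!mulr_sumr.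
rewrite /K0 /b0 cjD cj_dsum.
rewrite cjM conjc_real -(rho_half rho hr).
ring.
Qed.
Lemma bcd_exp (Q Q0 : 'M[C]_N) : Q = Q0 + Q m n *: E ->
  bcd_arg L sigma2 rho alpha G a beta x theta Q m n = b0 Q0.
Proof.
move=> hQ.
have e : forall i j, (beta i j)%:C * Dmat i j Q m n =
  (beta i j)%:C * Dmat i j Q0 m n + c * Q m n * ((beta i j)%:C * chi i j m n).
  move=> i j; rewrite (Dmat_shift _ _ _ _ _ _ _ _ _ _ m n i j Q0 Q (Q m n) hs hQ).
  ring.
rewrite /bcd_arg /b0 (eq_bigr _ (fun i _ => eq_bigr _ (fun j _ => e i j))).
under eq_bigr => i _ do rewrite big_split /= -mulr_sumr.
rewrite big_split /= -mulr_sumr.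
ring.
Qed.
End Main2.
End H2.


Theorem proposition4 (R : realType) (N M L I : nat)
  (hN : (0 < N)%N) (hM : (0 < M)%N) (hL : (0 < L)%N) (hI : (0 < I)%N)
  (sigma2 rho : R) (hsigma : 0 < sigma2) (hrho : 0 < rho)
  (alpha : 'I_I -> R[i]) (G : 'I_I -> 'M[R[i]]_(N, M)) (a : 'I_I -> 'cV[R[i]]_N)
  (beta : 'I_I -> 'I_I -> R)
  (hbeta : forall i j : 'I_I, (i < j)%N -> 0 <= beta i j)
  (x : 'cV[R[i]]_M) (theta : 'cV[R[i]]_N)
  (Q : 'M[R[i]]_N) (hQ : unimod Q) (m n : 'I_N) (t : R)
  (ht : bcd_arg L sigma2 rho alpha G a beta x theta Q m n
        = `|bcd_arg L sigma2 rho alpha G a beta x theta Q m n| * expj t) :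
  unimod (upd_entry Q m n (expj t)) /\
  forall Q' : 'M[R[i]]_N, unimod Q' ->
    (forall p q, (p != m) || (q != n) -> Q' p q = Q p q) ->
    varpi L sigma2 rho alpha G a beta x theta Q'
      <= varpi L sigma2 rho alpha G a beta x theta (upd_entry Q m n (expj t)).
Proof.
have hs : sigma2 != 0 by rewrite gt_eqF.
have hr : rho != 0 by rewrite gt_eqF.
have he : `|expj t| = 1 := norm_expj _ t.
have hee : expj t * conjc (expj t) = 1 by rewrite -sqr_normc he expr1n.
split.
  by move=> p q; rewrite mxE; case: ifP => _; [exact: he | exact: hQ].
move=> Q' hQ' hagree.
have dQ' := decomp _ _ m n Q Q' hagree.
have dN : upd_entry Q m n (expj t) =
          upd_entry Q m n 0 + (expj t) *: (delta_mx m n : 'M[R[i]]_N).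
  have := decomp _ _ m n Q (upd_entry Q m n (expj t)).
  have -> : (upd_entry Q m n (expj t)) m n = expj t by rewrite mxE !eqxx.
  apply => p q hpq.
  by rewrite mxE; case/orP: hpq => /negbTE -> //; rewrite andbF.
have dQ : Q = upd_entry Q m n 0 + Q m n *: (delta_mx m n : 'M[R[i]]_N).
  exact: decomp.
have hq : Q' m n * conjc (Q' m n) = 1 by rewrite -sqr_normc hQ' expr1n.
rewrite (varpi_exp _ _ _ _ _ _ _ _ _ _ _ _ _ hs hr m n _ _ _ hq dQ').
rewrite (varpi_exp _ _ _ _ _ _ _ _ _ _ _ _ _ hs hr m n _ _ _ hee dN).
rewrite (bcd_exp _ _ _ _ _ _ _ _ _ _ _ _ _ hs m n _ _ dQ) in ht.
move: ht; set b := b0 _ _ _ _ _ _ _ _ _ _ _ _ _ _ _ _ => ht.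
set e := expj t in hee ht he *.
set q := Q' m n in hq hQ' *.
rewrite -!addrA !lerD2l.
have h1 : conjc e * b = `|b|.
  by rewrite {1}ht mulrA (mulrC (conjc e)) -mulrA (mulrC (conjc e)) hee mulr1.
have h2 : e * conjc b = `|b|.
  by rewrite -[e]conjcK -cjM h1 cj_norm.
have h3 : q * conjc b = conjc (conjc q * b) by rewrite cjM conjcK.
rewrite h1 h2 h3.
set z := conjc q * b.
have hz : `|z| = `|b| by rewrite normrM normcJ hQ' mul1r.
have : z + conjc z = 2 * 'Re z by rewrite ReE' mulrC -mulrA mulVf ?mulr1 // pnatr_eq0.
move=> ->.
have -> : `|b| + `|b| = 2 * `|b| by rewrite mulr_natl mulr2n.
rewrite ler_pM2l ?ltr0n // -hz.
exact: (leif_Re_Creal z).1.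
Qed.
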